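(* Let $(G_n)_{n \geq 1}$ be a sequence of finite solvable groups of bounded derived length with $|G_n| \to \infty$. Then $(G_n)_{n \geq 1}$ does not have property BAb; that is, there is no function $f$ with $ab_k(G_n) \leq f(k)$ for all $k$ and all $n$. In particular $(G_n)_{n \geq 1}$ is not an expanding sequence of groups.
   Context: For a group $G$, $G' = [G,G]$ and $ab_k(G) = \sup\{ |H : H'| : H \leqslant G, \ |G:H| \leq k\}$. A sequence of groups $(G_n)$ has property BAb (bounded abelianizations) if there is a function $f$ of $k$ alone with $ab_k(G_n) \leq f(k)$ for all $k, n$. For a finite group $G$ and symmetric generating set $S$, the Cayley graph $\mathrm{Cay}(G,S)$ has vertex set $G$ and edges $(g, gs)$ for $g \in G$, $s \in S$. For a finite graph $\Gamma$, $h_{ver}(\Gamma) = \min_{X \neq \emptyset, |X| \leq |V(\Gamma)|/2} |\partial_{ver}X|/|X|$, where $\partial_{ver}X$ is the set of vertices at distance exactly $1$ from $X$; a sequence of regular bounded-degree graphs with vertex counts tending to infinity is expander if $h_{ver} \geq \varepsilon$ for a fixed $\varepsilon>0$. A sequence of finite groups $(G_n)$ with $|G_n| \to \infty$ is an expanding sequence if there are symmetric generating sets $S_n$ of bounded cardinality with $(\mathrm{Cay}(G_n, S_n))$ expander graphs. *)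

(* Defs.v *)
From HB Require Import structures.
From mathcomp Require Import all_boot all_order all_algebra all_fingroup all_solvable.
Set Implicit Arguments. Unset Strict Implicit. Unset Printing Implicit Defensive.
Import Order.TTheory GRing.Theory Num.Theory.

Local Open Scope group_scope.

(* ab_k(G) = sup { |H : H'| : H <= G, |G : H| <= k }  (a finite max; 0 if empty) *)
Definition ab_k (gT : finGroupType) (k : nat) (G : {set gT}) : nat :=
  \max_(H : {group gT} | (H \subset G) && (#|G : H| <= k)%N) #|H : H^`(1)|.

Definition BAb (gT : nat -> finGroupType) (G : forall n, {group gT n}) : Prop :=
  exists f : nat -> nat, forall k n, (ab_k k (G n) <= f k)%N.

(* Vertex boundary of X in Cay(G,S): vertices (of G) at distance exactly 1 from X,
   where edges are (g, g s), g in G, s in S. *)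
Definition ver_boundary (gT : finGroupType) (G S X : {set gT}) : {set gT} :=
  [set y in G | (y \notin X) && [exists x in X, exists s in S, y == x * s]].

Definition hver_ge (gT : finGroupType) (G S : {set gT}) (eps : rat) : Prop :=
  forall X : {set gT}, X \subset G -> X != set0 -> (2 * #|X| <= #|G|)%N ->
    (eps <= (#|ver_boundary G S X|)%:R / (#|X|)%:R)%R.

Definition sym_gen_set (gT : finGroupType) (G S : {set gT}) : Prop :=
  [/\ S \subset G, [set s^-1 | s in S] = S & <<S>> = G].

Definition expanding_seq (gT : nat -> finGroupType) (G : forall n, {group gT n}) : Prop :=
  (forall M : nat, exists N : nat, forall n, (N <= n)%N -> (M < #|G n|)%N) /\
  exists (b : nat) (eps : rat), (0 < eps)%R /\
    forall n, exists S : {set gT n},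
      [/\ sym_gen_set (G n) S, (#|S| <= b)%N & hver_ge (G n) S eps].

(* Main.v *)
Require Import Defs.
From HB Require Import structures.
From mathcomp Require Import all_boot all_order all_algebra all_fingroup all_solvable.
Set Implicit Arguments. Unset Strict Implicit. Unset Printing Implicit Defensive.
From mathcomp Require Import zify ring lra.
Import Order.TTheory GRing.Theory Num.Theory.
Local Open Scope group_scope.

Lemma leq_expbase (m n e : nat) : (m <= n)%N -> (m ^ e <= n ^ e)%N.
Proof. by move=> H; elim: e => [|e IH]; rewrite ?expnS ?leq_mul. Qed.

Lemma exp_beats_poly (c K : nat) : exists j, (c * j.+1 ^ K < 2 ^ j)%N.
Proof.
set t := (c * K.+1 ^ K)%N.
exists (K.+1 * t)%N.
have h1 : ((K.+1 * t).+1 <= K.+1 * t.+1)%N by lia.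
have h2 : (t.+1 <= 2 ^ t)%N by exact: ltn_expl.
apply: (@leq_ltn_trans (c * (K.+1 * t.+1) ^ K)%N).
  by rewrite leq_mul2l leq_expbase ?orbT.
rewrite expnMn mulnA -/t mulSn expnD.
have h3 : (t.+1 ^ K <= 2 ^ (K * t))%N.
  by rewrite mulnC expnM leq_expbase.
apply: (@leq_ltn_trans (t * 2 ^ (K * t))%N); first by rewrite leq_mul2l h3 orbT.
by rewrite ltn_pmul2r ?expn_gt0 // ltn_expl.
Qed.

Lemma bernoulli (e : rat) n : (0 <= e)%R -> (1 + n%:R * e <= (1 + e) ^+ n)%R.
Proof.
move=> e0; elim: n => [|n IH]; first by rewrite mul0r addr0 expr0.
rewrite exprS; apply: le_trans (_ : (1 + e) * (1 + n%:R * e) <= _)%R; last first.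
  by rewrite ler_wpM2l // addr_ge0.
rewrite mulrDr mulr1 mulrDl mul1r -natr1 mulrDl mul1r.
have : (0 <= e * (n%:R * e))%R by rewrite mulr_ge0 ?mulr_ge0.
move=> h; lra.
Qed.

Lemma choose_R (eps : rat) (m b : nat) : (0 < eps)%R ->
  exists R : nat, ((m * R.+1 ^ (m * b))%:R < (1 + eps) ^+ R)%R.
Proof.
move=> e0.
set p := Num.Def.archi_bound (eps^-1).
have hp : (eps^-1 < p%:R)%R by apply: archi_boundP; rewrite invr_ge0 ltW.
have p1 : (1 <= p%:R * eps)%R.
  by rewrite -(ler_pdivrMr _ _ e0) mul1r ltW.
have p0 : (0 < p)%N.
  rewrite lt0n; apply/eqP=> p0; move: p1; by rewrite p0 mul0r ler10.
have [j Hj] := exp_beats_poly (m * p ^ (m * b)) (m * b).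
exists (p * j)%N.
have A : ((m * (p * j).+1 ^ (m * b))%N < 2 ^ j)%N.
  apply: leq_ltn_trans Hj; rewrite -mulnA leq_mul2l -expnMn leq_expbase ?orbT //.
  by rewrite mulnS -[(p * j).+1]addn1 addnC leq_add2r.
apply: (lt_le_trans (_ : _ < (2 ^ j)%:R)%R); first by rewrite ltr_nat.
have e0' : (0 <= eps)%R by apply: ltW.
rewrite natrX exprM; apply: lerXn2r; rewrite ?nnegrE ?addr_ge0 ?exprn_ge0 //.
  by rewrite addr_ge0.
apply: le_trans (bernoulli p e0'); rewrite (_ : 2 = 1 + 1)%R // lerD2l //.
Qed.
Fixpoint Wset (gT : finGroupType) (N Y : {set gT}) (r : nat) : {set gT} :=
  match r with 0 => N | r'.+1 => Wset N Y r' :|: (Wset N Y r' * Y * N) end.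

Lemma W_sat (gT : finGroupType) (N : {group gT}) (Y : {set gT}) r x n :
  x \in Wset N Y r -> n \in N -> x * n \in Wset N Y r.
Proof.
elim: r x => [|r IH] x /=; first by move=> *; rewrite groupM.
case/setUP => [Hx Hn|]; first by rewrite inE IH.
case/mulsgP=> z n' /mulsgP[w y Hw Hy ->] Hn' -> Hn.
by rewrite inE -mulgA mem_mulg ?orbT ?mem_mulg ?groupM.
Qed.

Lemma W_sub (gT : finGroupType) (N A : {group gT}) (Y : {set gT}) r :
  N \subset A -> Y \subset A -> Wset N Y r \subset A.
Proof.
move=> sNA sYA; elim: r => [|r IH] //=.
rewrite subUset IH /=; apply/subsetP=> x.
move=> /mulsgP[z n /mulsgP[w y Hw Hy ->] Hn ->].
by rewrite !groupM //; [apply: (subsetP IH) | apply: (subsetP sYA) | apply: (subsetP sNA)].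
Qed.

Lemma W_mono (gT : finGroupType) (N Y : {set gT}) r : Wset N Y r \subset Wset N Y r.+1.
Proof. exact: subsetUl. Qed.

Lemma W_comm (gT : finGroupType) (N A : {group gT}) (Y : {set gT}) r w y :
  N \subset A -> Y \subset A -> [~: A, A] \subset N ->
  w \in Wset N Y r -> y \in A -> exists2 w', w' \in Wset N Y r & w * y = y * w'.
Proof.
move=> sNA sYA sAN Hw Hy; exists (w * [~ w, y]).
  apply: W_sat => //; apply: (subsetP sAN); apply: mem_commg => //.
  exact: (subsetP (W_sub r sNA sYA)).
by rewrite mulgA -commgC.
Qed.

Lemma W_set0 (gT : finGroupType) (N : {group gT}) r : Wset N set0 r = N.
Proof.
elim: r => [|r IH] //=; rewrite IH; apply/setP=> x; rewrite inE.
case: (x \in N) => //=; apply/negP=> /mulsgP[z n /mulsgP[w y _]]; by rewrite inE.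
Qed.

Lemma W_key (gT : finGroupType) (N A : {group gT}) (Y : {set gT}) r y x :
  N \subset A -> Y \subset A -> [~: A, A] \subset N -> y \in A ->
  x \in Wset N (y |: Y) r ->
  exists e, exists2 u, u \in Wset N Y r & (e <= r)%N /\ x = y ^+ e * u.
Proof.
move=> sNA sYA sAN yA; elim: r x => [|r IH] x /=.
  by move=> Hx; exists 0%N, x; rewrite ?mul1g.
case/setUP => [/IH[e [u Hu [Her ->]]]|].
  by exists e, u; [rewrite inE Hu | split=> //; apply: leqW].
case/mulsgP=> z n /mulsgP[w z' Hw Hz' ->] Hn ->.
have [e [u Hu [Her ->]]] := IH _ Hw.
case/setU1P: Hz' => [->|Hz'].
  have [u' Hu' Eu] := W_comm sNA sYA sAN Hu yA.
  exists e.+1, (u' * n); first by rewrite inE W_sat.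
  by split=> //; rewrite -(mulgA (y ^+ e) u y) Eu !mulgA expgSr.
exists e, (u * z' * n); first by rewrite inE mem_mulg ?orbT ?mem_mulg.
by split; [apply: leqW | rewrite !mulgA].
Qed.

Lemma W_card1 (gT : finGroupType) (N A : {group gT}) (Y : {set gT}) r y :
  N \subset A -> Y \subset A -> [~: A, A] \subset N -> y \in A ->
  (#|Wset N (y |: Y) r| <= r.+1 * #|Wset N Y r|)%N.
Proof.
move=> sNA sYA sAN yA.
apply: (leq_trans (subset_leq_card (_ : _ \subset
   [set y ^+ (val p.1) * p.2 | p in setX [set: 'I_r.+1] (Wset N Y r)]))).
  apply/subsetP=> x /(W_key sNA sYA sAN yA)[e [u Hu [He ->]]].
  by apply/imsetP; exists (Ordinal (n:=r.+1) He, u); rewrite ?inE /= ?Hu.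
by rewrite (leq_trans (leq_imset_card _ _)) // cardsX cardsT card_ord.
Qed.

Lemma W_card (gT : finGroupType) (N A : {group gT}) r (ys : seq gT) :
  N \subset A -> {subset ys <= A} -> [~: A, A] \subset N ->
  (#|Wset N [set:: ys] r| <= r.+1 ^ size ys * #|N|)%N.
Proof.
move=> sNA sysA sAN; elim: ys sysA => [|y ys IH] sysA.
  by rewrite set_nil W_set0 expn0 mul1n.
have sub: [set:: ys] \subset A.
  by apply/subsetP=> x; rewrite inE => Hx; apply: sysA; rewrite inE Hx orbT.
have yA : y \in A by apply: sysA; rewrite inE eqxx.
rewrite set_cons (leq_trans (@W_card1 _ _ _ _ r _ sNA sub sAN yA)) //.
rewrite expnS -mulnA leq_mul2l IH ?orbT // => x Hx.
by apply: sysA; rewrite inE Hx orbT.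
Qed.

Fixpoint Zset (gT : finGroupType) (N S : {set gT}) (r : nat) : {set gT} :=
  match r with 0 => N | r'.+1 => Zset N S r' :|: Zset N S r' * S end.

Lemma Z_sub (gT : finGroupType) (G N : {group gT}) (S : {set gT}) r :
  N \subset G -> S \subset G -> Zset N S r \subset G.
Proof.
move=> sNG sSG; elim: r => [|r IH] //=; rewrite subUset IH /=.
apply/subsetP=> x; move=> /mulsgP[z s Hz Hs ->].
by rewrite groupM //; [apply: (subsetP IH) | apply: (subsetP sSG)].
Qed.

Lemma Z_card (gT : finGroupType) (G N : {group gT}) (S : {set gT}) r :
  N \subset G -> S \subset G ->
  #|Zset N S r.+1| = (#|Zset N S r| + #|ver_boundary G S (Zset N S r)|)%N.
Proof.
move=> sNG sSG.
have E : Zset N S r.+1 = Zset N S r :|: ver_boundary G S (Zset N S r).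
  apply/setP=> x; rewrite /= inE /ver_boundary !inE.
  case Hx: (x \in Zset N S r) => //=.
  apply/idP/idP.
    move=> H; have xG : x \in G.
      by apply: (subsetP (Z_sub r.+1 sNG sSG)); rewrite /= inE H orbT.
    rewrite xG /=; case/mulsgP: H => z s Hz Hs ->.
    by apply/existsP; exists z; rewrite Hz; apply/existsP; exists s; rewrite Hs eqxx.
  case/andP=> _ /existsP[z /andP[Hz /existsP[s /andP[Hs /eqP->]]]].
  exact: mem_mulg.
rewrite E cardsU.
have -> : Zset N S r :&: ver_boundary G S (Zset N S r) = set0.
  apply/setP=> x; rewrite /ver_boundary !inE.
  by case: (x \in Zset N S r); rewrite ?andbF.
by rewrite cards0 subn0.
Qed.

Lemma Z_bound (gT : finGroupType) (G A N : {group gT}) (S : {set gT}) r :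
  A \subset G -> N \subset A -> [~: A, A] \subset N -> S \subset G ->
  (#|Zset N S r| <= r.+1 ^ (#|G : A| * #|S|) * #|N| * #|G : A|)%N.
Proof.
move=> sAG sNA sAN sSG.
set T := [set repr C | C in rcosets A G].
set f := fun p : gT * gT => p.1 * p.2 * (repr (A :* (p.1 * p.2)))^-1.
set Y := [set f p | p in setX T S].
have reprG g : g \in G -> repr (A :* g) \in G.
  move=> gG; have := mem_repr_rcoset A g; rewrite mem_rcoset => H.
  by rewrite -(mulgKV g (repr _)) groupM // (subsetP sAG).
have reprT g : g \in G -> repr (A :* g) \in T.
  by move=> gG; apply/imsetP; exists (A :* g) => //; by rewrite mem_rcosets -(mul1g g) mem_mulg.
have sTG : T \subset G.
  apply/subsetP=> t /imsetP[C /imsetP[g gG ->] ->]; by rewrite rcosetE; apply: reprG.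
have T1 : 1 \in T by rewrite -(repr_group A) -{1}(rcoset1 A) reprT.
have sYA : Y \subset A.
  apply/subsetP=> y /imsetP[[t s] _ ->]; rewrite /f /=.
  have := mem_repr_rcoset A (t * s); rewrite mem_rcoset => H.
  by rewrite -[_ * _^-1]invgK invMg invgK groupV.
have cT : (#|T| <= #|G : A|)%N by apply: leq_imset_card.
have cY : (#|Y| <= #|G : A| * #|S|)%N.
  by rewrite (leq_trans (leq_imset_card _ _)) // cardsX leq_mul2r cT orbT.
have sZ : Zset N S r \subset [set p.1 * p.2 | p in setX (Wset N Y r) T].
  elim: r => [|r IH] /=.
    apply/subsetP=> x xN; apply/imsetP; exists (x, 1); last by rewrite mulg1.
    by rewrite inE xN T1.
  apply/subsetP=> x; case/setUP.
    move=> /(subsetP IH) /imsetP[[w t]]; rewrite inE /= => /andP[Hw Ht] ->.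
    by apply/imsetP; exists (w, t); rewrite // inE /= Ht inE Hw.
  case/mulsgP=> z s /(subsetP IH) /imsetP[[w t]]; rewrite inE /= => /andP[Hw Ht] -> Hs ->.
  have tsG : t * s \in G by rewrite groupM //; [apply: (subsetP sTG) | apply: (subsetP sSG)].
  apply/imsetP; exists (w * f (t, s) * 1, repr (A :* (t * s))).
    rewrite inE /= reprT // andbT inE; apply/orP; right.
    rewrite mem_mulg //; first rewrite mem_mulg //; by apply: imset_f; rewrite inE Ht Hs.
  by rewrite /= mulg1 /f /= -[RHS]mulgA mulgKV mulgA.
rewrite (leq_trans (subset_leq_card sZ)) // (leq_trans (leq_imset_card _ _)) //.
rewrite cardsX; apply: leq_mul => //.
rewrite -{1}(set_enum Y) (leq_trans (W_card r (ys := enum Y) sNA _ sAN)) //.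
- by move=> y; rewrite mem_enum => /(subsetP sYA).
- by rewrite leq_mul2r -cardE leq_pexp2l ?orbT.
Qed.

Lemma N_subZ (gT : finGroupType) (N S : {set gT}) r : N \subset Zset N S r.
Proof. elim: r => [|r IH] //=; exact: subset_trans IH (subsetUl _ _). Qed.

Lemma Z_growth (gT : finGroupType) (G N : {group gT}) (S : {set gT}) (eps : rat) r :
  N \subset G -> S \subset G -> (0 < eps)%R -> hver_ge G S eps ->
  (forall r', (r' < r)%N -> (2 * #|Zset N S r'| <= #|G|)%N) ->
  ((1 + eps) ^+ r * (#|N|)%:R <= (#|Zset N S r|)%:R)%R.
Proof.
move=> sNG sSG e0 hv; elim: r => [|r IH] Hr; first by rewrite expr0 mul1r.
have IH' := IH (fun r' h => Hr r' (leqW h)).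
set X := Zset N S r.
have Xne : X != set0.
  by apply/set0Pn; exists 1; apply: (subsetP (N_subZ N S r)).
have X0 : (0 < (#|X|)%:R :> rat)%R.
  by rewrite ltr0n card_gt0.
have := hv X (Z_sub r sNG sSG) Xne (Hr r (ltnSn r)).
rewrite ler_pdivlMr // => hb.
rewrite (Z_card r sNG sSG) natrD exprS -mulrA.
apply: le_trans (_ : (1 + eps) * (#|X|)%:R <= _)%R.
  by rewrite ler_wpM2l // addr_ge0 // ltW.
by rewrite mulrDl mul1r lerD2l.
Qed.

Lemma index_step (gT : finGroupType) (G A N : {group gT}) (S : {set gT})
    (eps : rat) (b m R : nat) :
  A \subset G -> N \subset A -> [~: A, A] \subset N -> S \subset G ->
  (#|S| <= b)%N -> (0 < eps)%R -> hver_ge G S eps -> (#|G : A| <= m)%N ->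
  ((m * R.+1 ^ (m * b))%:R < (1 + eps) ^+ R)%R ->
  (#|G : N| <= 2 * m * R.+1 ^ (m * b))%N.
Proof.
move=> sAG sNA sAN sSG Sb e0 hv Am HR.
have sNG : N \subset G by apply: subset_trans sNA sAG.
have bnd r : (r <= R)%N -> (#|Zset N S r| <= R.+1 ^ (m * b) * #|N| * m)%N.
  move=> rR; apply: leq_trans (Z_bound r sAG sNA sAN sSG) _.
  rewrite leq_mul // leq_mul2r orbC; apply/orP; left.
  apply: leq_trans (leq_expbase _ (_ : r.+1 <= R.+1)%N) => //.
  by rewrite leq_pexp2l // leq_mul.
have N0 : (0 < #|N|)%N by rewrite cardG_gt0.
case: (boolP [exists r : 'I_R, ~~ (2 * #|Zset N S r| <= #|G|)%N]).
  case/existsP=> r; rewrite -ltnNge => Hr.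
  have := leq_trans Hr (leq_mul (leqnn 2) (bnd r (ltnW (ltn_ord r)))).
  rewrite -(Lagrange sNG) => H.
  rewrite -(leq_pmul2l N0); apply: ltnW; apply: leq_trans H _.
  by apply: eq_leq; set q := (R.+1 ^ (m * b))%N; nia.
rewrite negb_exists => /forallP Hall.
have Hr r' : (r' < R)%N -> (2 * #|Zset N S r'| <= #|G|)%N.
  by move=> h; have := Hall (Ordinal h); rewrite negbK.
have := Z_growth sNG sSG e0 hv Hr.
move=> H1; have H2 := bnd R (leqnn R).
have : ((1 + eps) ^+ R * (#|N|)%:R <= ((m * R.+1 ^ (m * b))%N)%:R * (#|N|)%:R)%R.
  apply: le_trans H1 _; rewrite -natrM ler_nat.
  by apply: leq_trans H2 _; apply: eq_leq; set q := (R.+1 ^ (m * b))%N; nia.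
rewrite ler_pM2r ?ltr0n // => H3.
by move: (lt_le_trans HR H3); rewrite ltxx.
Qed.

Lemma final_contra (gT : nat -> finGroupType) (G : forall n, {group gT n}) :
  (exists d : nat, forall n, (G n)^`(d) = 1) ->
  (forall M : nat, exists N : nat, forall n, (N <= n)%N -> (M < #|G n|)%N) ->
  (forall i, exists M, forall n, (#|G n : (G n)^`(i)| <= M)%N) -> False.
Proof.
move=> [d Hd] Hinf Hb; have [M HM] := Hb d.
have [N0 HN] := Hinf M; have := HN N0 (leqnn N0).
by have := HM N0; rewrite Hd indexg1 => h1 h2; move: (leq_trans h2 h1); rewrite ltnn.
Qed.

Theorem mainTheorem5 (gT : nat -> finGroupType) (G : forall n, {group gT n})
  (Hsolv : forall n, solvable (G n))
  (Hdl : exists d : nat, forall n, (G n)^`(d) = 1)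
  (Hinf : forall M : nat, exists N : nat, forall n, (N <= n)%N -> (M < #|G n|)%N) :
  ~ BAb G /\ ~ expanding_seq G.
Proof.
split.
  move=> [f Hf]; apply: (final_contra Hdl Hinf); elim=> [|i [M HM]].
    by exists 1%N => n; rewrite derg0 indexgg.
  exists (M * f M)%N => n.
  rewrite -(Lagrange_index (der_sub i (G n)) (der_subS i (G n))).
  apply: leq_mul; first exact: HM.
  apply: leq_trans (Hf M n).
  rewrite [X in #|_ : X|]/= dergSn -derg1.
  rewrite /ab_k; apply: (@leq_bigmax_cond _ _ (fun H : {group gT n} => #|H : H^`(1)|) ((G n)^`(i))%G).
  by rewrite der_sub HM.
move=> [_ [b [eps [e0 HS]]]]; apply: (final_contra Hdl Hinf); elim=> [|i [M HM]].
  by exists 1%N => n; rewrite derg0 indexgg.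
have [R HR] := choose_R M b e0.
exists (2 * M * R.+1 ^ (M * b))%N => n.
have [S [[sSG _ _] Sb hv]] := HS n.
apply: (index_step (A := ((G n)^`(i))%G) (S := S) _ _ _ sSG Sb e0 hv (HM n) HR).
- exact: der_sub.
- exact: der_subS.
- by rewrite /= dergSn.
Qed.
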